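(* Let $A$ be a finite Abelian group of order $n$, and let $G=\mathrm{Cay}(A,S)$ be a Cayley graph on $A$ of degree $r=|S|$. (a) If $\gcd(n,r)=1$, then every group automorphism of $A$, viewed as a bijection $V(G)=A\to A$, is an $A$-distance antimagic labelling of $G$; in particular $G$ is $A$-distance antimagic. (b) If $\exp(A)$ divides $r$, then every group automorphism $f$ of $A$ is an $A$-distance magic labelling of $G$ with magic constant $\sum_{s\in S} f(s)$; in particular $G$ is $A$-distance magic.
   Context: For an Abelian group $A$ and $S\subseteq A\setminus\{0\}$ with $S=-S$, the Cayley graph $\mathrm{Cay}(A,S)$ has vertex set $A$, with $x,y$ adjacent iff $x-y\in S$. $\exp(A)$ is the least positive integer $m$ with $mx=0$ for all $x\in A$. For a graph $G$ with $n$ vertices and an Abelian group $A$ of order $n$ (written additively), and a bijection $f:V(G)\to A$, the weight of $x$ is $w_f(x)=\sum_{y\in N(x)} f(y)$ computed in $A$ ($N(x)$ the open neighbourhood). $f$ is an $A$-distance antimagic labelling if all weights are pairwise distinct, and an $A$-distance magic labelling if all weights are equal (the common value is the magic constant). $G$ is $A$-distance antimagic (resp. magic) if it admits such a labelling. *)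

(* Defs.v *)
From HB Require Import structures.
From mathcomp Require Import all_boot all_order all_algebra all_fingroup all_solvable.
Set Implicit Arguments. Unset Strict Implicit. Unset Printing Implicit Defensive.
Import GRing.Theory.
Local Open Scope ring_scope.

Definition cay_nbhd (A : finZmodType) (S : {set A}) (x : A) : {set A} :=
  [set y : A | x - y \in S].

Definition cay_weight (A : finZmodType) (S : {set A}) (f : A -> A) (x : A) : A :=
  \sum_(y in cay_nbhd S x) f y.

Definition is_dist_antimagic_labelling (A : finZmodType) (S : {set A}) (f : A -> A) :=
  bijective f /\ injective (cay_weight S f).

Definition is_dist_magic_labelling (A : finZmodType) (S : {set A}) (f : A -> A) (c : A) :=
  bijective f /\ forall x, cay_weight S f x = c.

Definition dist_antimagic (A : finZmodType) (S : {set A}) :=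
  exists f : A -> A, is_dist_antimagic_labelling S f.

Definition dist_magic (A : finZmodType) (S : {set A}) :=
  exists (f : A -> A) (c : A), is_dist_magic_labelling S f c.

Definition is_group_aut (A : finZmodType) (f : A -> A) :=
  (forall x y, f (x + y) = f x + f y) /\ bijective f.

Lemma expA_exists (A : finZmodType) :
  exists m, (0 < m)%N && [forall x : A, x *+ m == 0].
Proof.
exists #|A|; apply/andP; split; first by apply/card_gt0P; exists 0.
apply/forallP=> x; change (x *+ #|A| == 0) with ((x ^+ #|A|)%g == 1%g).
by apply/eqP; have := expg_cardG (in_setT x); rewrite cardsT.
Qed.

Definition expA (A : finZmodType) : nat := ex_minn (expA_exists A).

(* Main.v *)
Require Import Defs.
From HB Require Import structures.
From mathcomp Require Import all_boot all_order all_algebra all_fingroup all_solvable.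
Local Open Scope ring_scope.
Import GRing.Theory.

Lemma cop_zero (A : finZmodType) (z : A) n m :
  z *+ n = 0 -> z *+ m = 0 -> coprime n m -> z = 0.
Proof.
move=> hn hm cop.
have h1 : (#[z]%g %| n)%N.
  by rewrite order_dvdn; apply/eqP; exact: hn.
have h2 : (#[z]%g %| m)%N.
  by rewrite order_dvdn; apply/eqP; exact: hm.
have : (#[z]%g %| gcdn n m)%N by rewrite dvdn_gcd h1 h2.
rewrite (eqP cop) order_dvdn => /eqP H.
by have : z *+ 1 = 0 by exact: H.
Qed.

Lemma weightE (A : finZmodType) (S : {set A})
  (Ssym : forall s, s \in S -> - s \in S) (f : A -> A)
  (fadd : forall x y, f (x + y) = f x + f y) x :
  cay_weight S f x = f x *+ #|S| + \sum_(s in S) f s.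
Proof.
rewrite /cay_weight /cay_nbhd.
rewrite (eq_bigl (fun y => x - y \in S)); last by move=> y; rewrite inE.
rewrite (reindex_inj (addrI x)) /=.
rewrite (eq_bigl (fun s => s \in S)); last first.
  move=> s; rewrite opprD addrA subrr add0r.
  apply/idP/idP => [/Ssym|/Ssym //]; by rewrite opprK.
under eq_bigr => s _ do rewrite fadd.
by rewrite big_split /= sumr_const.
Qed.

Theorem mainTheorem2 (A : finZmodType) (S : {set A})
  (S0 : 0 \notin S) (Ssym : forall s, s \in S -> - s \in S) :
  (coprime #|A| #|S| ->
     (forall f : A -> A, is_group_aut f -> is_dist_antimagic_labelling S f)
     /\ dist_antimagic S)
  /\
  ((expA A %| #|S|)%N ->
     (forall f : A -> A, is_group_aut f ->
        is_dist_magic_labelling S f (\sum_(s in S) f s))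
     /\ dist_magic S).
Proof.
have idaut : is_group_aut (@id A) by split => //; exists id.
split.
  move=> cop.
  have H : forall f : A -> A, is_group_aut f -> is_dist_antimagic_labelling S f.
    move=> f [fadd fbij]; split => // x y.
    rewrite !(@weightE A S Ssym f fadd) => /addIr E.
    have f0 : f 0 = 0 by apply/(addrI (f 0)); rewrite -fadd !addr0.
    have ex : f x = f (x - y) + f y by rewrite -fadd subrK.
    have z : f (x - y) *+ #|S| = 0.
      by apply/(addIr (f y *+ #|S|)); rewrite -mulrnDl -ex E add0r.
    have zA : f (x - y) *+ #|A| = 0.
      apply/eqP; change ((f (x - y) ^+ #|A|)%g == 1%g).
      by apply/eqP; have := expg_cardG (in_setT (f (x - y))); rewrite cardsT.
    have := @cop_zero A _ _ _ zA z cop; rewrite -f0 => /(bij_inj fbij) /eqP.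
    by rewrite subr_eq0 => /eqP.
  by split => //; exists id; apply: H.
move=> dv.
have H : forall f : A -> A, is_group_aut f ->
        is_dist_magic_labelling S f (\sum_(s in S) f s).
  move=> f [fadd fbij]; split => // x.
  rewrite (@weightE A S Ssym f fadd).
  move: dv; rewrite /expA; case: ex_minnP => m /andP[_ /forallP Hm] _.
  case/dvdnP => k ->.
  by rewrite mulnC mulrnA (eqP (Hm (f x))) mul0rn add0r.
by split => //; exists id, (\sum_(s in S) s); apply: H.
Qed.
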